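(* Let $\mathcal F$ be a family of finite graphs and let $I_{\mathcal F}\colon T_{\mathrm{Graph}}\leadsto\mathrm{Forb}_{T_{\mathrm{Graph}}}(\mathcal F)$ be the axiom-adding interpretation, where $\mathrm{Forb}_{T_{\mathrm{Graph}}}(\mathcal F)$ is the theory of graphs containing no induced copy of any member of $\mathcal F$. If $\mathcal F$ contains a complete graph, then $$\chi(I_{\mathcal F})=\max\bigl(\{\ell\in\mathbb{N}_+:\mathcal F\text{ contains no complete $\ell$-partite graph}\}\cup\{0\}\bigr)+1=\min\{\ell\in\mathbb{N}_+:\mathcal F\text{ contains a complete $\ell$-partite graph}\};$$ otherwise $\chi(I_{\mathcal F})=\infty$.
   Context: A complete graph is $K_n$ for some $n\ge 0$ (all pairs of distinct vertices adjacent). A graph $G$ is complete $\ell$-partite if there exists a function $f\colon V(G)\to[\ell]$ (not necessarily surjective, so parts may be empty) such that distinct vertices $v,w$ are adjacent iff $f(v)\neq f(w)$. Membership of a graph in $\mathcal F$ is up to isomorphism. For $T=\mathrm{Forb}_{T_{\mathrm{Graph}}}(\mathcal F)$ and $I=I_{\mathcal F}$, $I(N)=N$ and $\chi(I)=\sup(\{\ell\in\mathbb{N}_+:\forall n\in\mathbb{N}\ \exists N\in\mathcal M_n[T],\ T_{n,\ell}\subseteq I(N)\}\cup\{0\})+1$, where $\mathcal M_n[T]$ is the set of $n$-vertex models of $T$ up to isomorphism, $T_{n,\ell}$ is the complete $\ell$-partite graph on $n$ vertices with parts of sizes $\lfloor n/\ell\rfloor$ or $\lceil n/\ell\rceil$,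 and $G\subseteq H$ means there is an injection $V(G)\to V(H)$ mapping edges to edges. *)

(* Defs.v *)
From mathcomp Require Import all_boot.
Unset Printing Implicit Defensive.

Record graph := Graph { gn : nat; gadj : rel 'I_gn }.

Definition is_graph (G : graph) : Prop :=
  (forall v, ~~ gadj G v v) /\ (forall v w, gadj G v w = gadj G w v).

(* a family of finite graphs is a predicate on graphs; membership up to
   isomorphism is handled below by only testing isomorphism-invariant
   properties or using embeddings. *)
Definition graph_family := graph -> Prop.

Definition is_complete (G : graph) : Prop :=
  is_graph G /\ forall v w : 'I_(gn G), v != w -> gadj G v w.

(* complete l-partite (parts may be empty) *)
Definition is_complete_multipartite (l : nat) (G : graph) : Prop :=
  is_graph G /\ exists f : 'I_(gn G) -> 'I_l,
    forall v w : 'I_(gn G), v != w -> gadj G v w = (f v != f w).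

Definition fam_contains (F : graph_family) (P : graph -> Prop) : Prop :=
  exists G, F G /\ P G.

Definition induced_copy (H G : graph) : Prop :=
  exists f : 'I_(gn H) -> 'I_(gn G), injective f /\
    forall v w, gadj H v w = gadj G (f v) (f w).

Definition subgraph (G H : graph) : Prop :=
  exists f : 'I_(gn G) -> 'I_(gn H), injective f /\
    forall v w, gadj G v w -> gadj H (f v) (f w).

Definition forb_model (F : graph_family) (N : graph) : Prop :=
  is_graph N /\ forall H, F H -> ~ induced_copy H N.

(* Turán graph T_{n,l}: vertex v in part (v mod l); parts have sizes
   floor(n/l) or ceil(n/l). *)
Definition turan (n l : nat) : graph :=
  @Graph n (fun v w : 'I_n => (v != w) && (v %% l != w %% l)).

Definition chi_set (F : graph_family) (l : nat) : Prop :=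
  0 < l /\ forall n, exists N, forb_model F N /\ gn N = n /\ subgraph (turan n l) N.

(* chi(I_F) = sup (chi_set F ∪ {0}) + 1 ; None encodes infinity *)
Definition is_chi (F : graph_family) (c : option nat) : Prop :=
  match c with
  | None => forall m, exists l, m < l /\ chi_set F l
  | Some k => 0 < k /\ (forall l, chi_set F l -> l < k) /\ (k.-1 = 0 \/ chi_set F k.-1)
  end.

(* Main.v *)
Require Import Defs.
From mathcomp Require Import all_boot.
From mathcomp Require Import zify.
From Stdlib Require Import Classical ClassicalEpsilon.

Lemma ramsey k s : exists R, forall (T : finType) (r : rel T), (forall x y, r x y = r y x) ->
  forall B : {set T}, R <= #|B| -> exists A : {set T}, A \subset B /\
   ((k <= #|A| /\ forall x y, x \in A -> y \in A -> x != y -> r x y) \/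
    (s <= #|A| /\ forall x y, x \in A -> y \in A -> x != y -> ~~ r x y)).
Proof.
elim: k s => [|k IHk] s.
  exists 0 => T r _ B _; exists set0; split; first exact: sub0set.
  by left; split=> // x y; rewrite in_set0.
elim: s => [|s IHs].
  exists 0 => T r _ B _; exists set0; split; first exact: sub0set.
  by right; split=> // x y; rewrite in_set0.
have [R1 HR1] := IHk s.+1.
have [R2 HR2] := IHs.
exists (R1 + R2).+1 => T r rs B HB.
have /set0Pn [x xB] : B != set0 by rewrite -card_gt0 (leq_trans _ HB).
have HB' : R1 + R2 <= #|B :\ x|.
  by move: HB; rewrite (cardsD1 x B) xB.
have Hc := cardsID [set y | r x y] (B :\ x).
have xnB' : x \notin B :\ x by rewrite in_setD1 eqxx.
have sB' : B :\ x \subset B := subsetDl _ _.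
case: (leqP R1 #|(B :\ x) :&: [set y | r x y]|) => [h1|h1].
- have [A [sA [[hk hc]|[hs hi]]]] := HR1 T r rs _ h1.
  + have inA y : y \in A -> y \in B :\ x /\ r x y.
      by move=> /(subsetP sA); rewrite in_setI inE => /andP[].
    have xnA : x \notin A by apply/negP => /inA [] h _; rewrite h in xnB'.
    exists (x |: A); split.
      rewrite subUset sub1set xB /=; apply/subsetP => y /inA [] /(subsetP sB') //.
    left; split; first by rewrite cardsU1 xnA.
    move=> x0 y0 /setU1P [->|ha] /setU1P [->|hb] ne.
    * by rewrite eqxx in ne.
    * by case: (inA _ hb).
    * by rewrite rs; case: (inA _ ha).
    * exact: hc.
  + exists A; split; last by right.
    apply: (subset_trans sA); apply: (subset_trans _ sB'); exact: subsetIl.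
- have h2 : R2 <= #|(B :\ x) :\: [set y | r x y]| by lia.
  have [A [sA [[hk hc]|[hs hi]]]] := HR2 T r rs _ h2.
  + exists A; split; last by left.
    apply: (subset_trans sA); apply: (subset_trans _ sB'); exact: subsetDl.
  + have inA y : y \in A -> y \in B :\ x /\ ~~ r x y.
      by move=> /(subsetP sA); rewrite in_setD inE => /andP[].
    have xnA : x \notin A by apply/negP => /inA [] h _; rewrite h in xnB'.
    exists (x |: A); split.
      rewrite subUset sub1set xB /=; apply/subsetP => y /inA [] /(subsetP sB') //.
    right; split; first by rewrite cardsU1 xnA.
    move=> x0 y0 /setU1P [->|ha] /setU1P [->|hb] ne.
    * by rewrite eqxx in ne.
    * by case: (inA _ hb).
    * by rewrite rs; case: (inA _ ha).
    * exact: hi.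
Qed.

Lemma turan_graph n l : is_graph (turan n l).
Proof.
split=> [v|v w]; first by rewrite /= eqxx.
by rewrite /= eq_sym [_ %% l == _]eq_sym.
Qed.

Lemma cmp_mono l l' G : l <= l' -> is_complete_multipartite l G -> is_complete_multipartite l' G.
Proof.
move=> hl [hG [f hf]]; split=> //.
exists (fun v => widen_ord hl (f v)) => v w ne; rewrite hf //.
Qed.

Arguments cmp_mono {l l' G}.

Lemma complete_cmp G : is_complete G -> is_complete_multipartite (gn G) G.
Proof. by move=> [hG hc]; split=> //; exists id => v w ne; rewrite hc. Qed.

Arguments complete_cmp {G}.

Lemma key2 F (HF : forall G, F G -> is_graph G) l : 0 < l ->
  ~ fam_contains F (is_complete_multipartite l) -> chi_set F l.
Proof.
move=> l0 hn; split=> // n; exists (turan n l); split; last split => //.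
  split; first exact: turan_graph.
  move=> H FH [emb [einj he]]; apply: hn; exists H; split=> //; split; first exact: HF.
  exists (fun v => Ordinal (ltn_pmod (emb v) l0)) => v w ne.
  rewrite he /= (inj_eq einj) ne /=; done.
by exists id; split.
Qed.

Lemma key3 F (HF : forall G, F G -> is_graph G) l : 0 < l ->
  ~ fam_contains F is_complete -> chi_set F l.
Proof.
move=> l0 hn; split=> // n; exists (@Graph n (fun v w => v != w)); split; last split => //.
  split; first by split=> [v|v w] /=; rewrite ?eqxx // eq_sym.
  move=> H FH [emb [einj he]]; apply: hn; exists H; split=> //; split; first exact: HF.
  by move=> v w ne; rewrite he /= (inj_eq einj).
by exists id; split => // v w /= /andP[].
Qed.

Lemma key1 F (HF : forall G, F G -> is_graph G) l : chi_set F l ->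
  fam_contains F is_complete -> ~ fam_contains F (is_complete_multipartite l).
Proof.
move=> [l0 Hn] [K [FK [[Kirr Ksym] Kc]]] [G [FG [[Girr Gsym] [fG HfG]]]].
have [R HR] := ramsey (gn K) (gn G).
have [N [[[Nirr Nsym] HN] [_ [e [einj He]]]]] := Hn (l * R).
pose r := fun v w : 'I_(l*R) => gadj N (e v) (e w).
have rs : forall x y, r x y = r y x by move=> x y; rewrite /r Nsym.
pose Bi (i : 'I_l) := [set v : 'I_(l*R) | v %% l == i].
have HB i : R <= #|Bi i|.
  have lt j : j < R -> i + l * j < l * R.
    move=> hj; apply: (@leq_trans (l * j.+1)); last exact: leq_mul (leqnn l) hj.
    by rewrite mulnS ltn_add2r.
  pose g (j : 'I_R) : 'I_(l*R) := Ordinal (lt j (ltn_ord j)).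
  have ginj : injective g.
    move=> a b /(congr1 val) /= /eqP; rewrite eqn_add2l eqn_pmul2l // => /eqP.
    exact: val_inj.
  apply: (@leq_trans #|g @: [set: 'I_R]|); first by rewrite card_imset // cardsT card_ord.
  apply: subset_leq_card; apply/subsetP => _ /imsetP [j _ ->].
  by rewrite inE /= addnC mulnC modnMDl modn_small.
have Hind : forall i : 'I_l, exists A : {set 'I_(l*R)}, A \subset Bi i /\ gn G <= #|A| /\
    forall x y, x \in A -> y \in A -> x != y -> ~~ r x y.
  move=> i; have [A [sA [[hk hc]|[hs hi]]]] := HR _ r rs (Bi i) (HB i); last by exists A.
  exfalso; apply: (HN K FK).
  exists (fun a => e (enum_val (widen_ord hk a))); split.
    by move=> a b /einj /enum_val_inj /(congr1 val) /= /val_inj.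
  move=> a b; case: (eqVneq a b) => [->|ne].
    by rewrite (negbTE (Kirr b)) (negbTE (Nirr _)).
  rewrite Kc //; symmetry; apply: hc; try exact: enum_valP.
  by apply: contra_neq ne => /enum_val_inj /(congr1 val) /= /val_inj.
pose Af i := proj1_sig (constructive_indefinite_description _ (Hind i)).
have HAf i : Af i \subset Bi i /\ gn G <= #|Af i| /\
    forall x y, x \in Af i -> y \in Af i -> x != y -> ~~ r x y :=
  proj2_sig (constructive_indefinite_description _ (Hind i)).
pose d (i : 'I_l) (v : 'I_(gn G)) : 'I_(l*R) := enum_val (widen_ord (HAf i).2.1 v).
have dA i v : d i v \in Af i by exact: enum_valP.
have dmod i v : d i v %% l = i.
  by have := subsetP (HAf i).1 _ (dA i v); rewrite inE => /eqP.
have dinj i v w : d i v = d i w -> v = w.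
  by move=> /enum_val_inj /(congr1 val) /= /val_inj.
apply: (HN G FG); exists (fun v => e (d (fG v) v)); split.
  move=> v w /einj E.
  have Ef : fG v = fG w.
    by apply: val_inj; rewrite /= -(dmod (fG v) v) -(dmod (fG w) w) E.
  by move: E; rewrite -Ef => /dinj.
move=> v w; case: (eqVneq v w) => [->|ne].
  by rewrite (negbTE (Girr w)) (negbTE (Nirr _)).
rewrite HfG //; case: (eqVneq (fG v) (fG w)) => [Ef|nf] /=.
  rewrite -Ef; apply/esym/negbTE; apply: (HAf (fG v)).2.2; try exact: dA.
  by apply: contra_neq ne => /dinj.
symmetry; apply: He; rewrite /= !dmod nf andbT.
by apply: contra_neq nf => E; apply: val_inj; rewrite /= -(dmod (fG v) v) -(dmod (fG w) w) E.
Qed.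

Lemma find_m F j : 0 < j -> fam_contains F (is_complete_multipartite j) ->
  exists m, (m = 0 \/ (0 < m /\ ~ fam_contains F (is_complete_multipartite m))) /\
    fam_contains F (is_complete_multipartite m.+1).
Proof.
elim: j => [//|j IH] _ hj.
case: j IH hj => [|j] IH hj; first by exists 0; split=> //; left.
case: (classic (fam_contains F (is_complete_multipartite j.+1))) => h.
  exact: IH.
by exists j.+1; split=> //; right.
Qed.

Theorem mainTheorem14 (F : graph_family) (HF : forall G, F G -> is_graph G) :
  (fam_contains F is_complete ->
     exists m : nat,
       (* m = max ({l in N_+ : F contains no complete l-partite graph} ∪ {0}) *)
       ((m = 0 \/ (0 < m /\ ~ fam_contains F (is_complete_multipartite m))) /\
        (forall l, 0 < l -> ~ fam_contains F (is_complete_multipartite l) -> l <= m)) /\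
       (* chi(I_F) = m + 1 *)
       is_chi F (Some m.+1) /\
       (* m + 1 = min {l in N_+ : F contains a complete l-partite graph} *)
       (fam_contains F (is_complete_multipartite m.+1) /\
        (forall l, 0 < l -> fam_contains F (is_complete_multipartite l) -> m.+1 <= l)))
  /\
  (~ fam_contains F is_complete -> is_chi F None).
Proof.
split; last first.
  by move=> hn m; exists m.+1; split=> //; apply: key3.
move=> hK.
have hK' := hK; case: hK' => [K [FK cK]].
have [m [hm hm1]] : exists m, (m = 0 \/ (0 < m /\ ~ fam_contains F (is_complete_multipartite m))) /\
    fam_contains F (is_complete_multipartite m.+1).
  apply: (@find_m F (gn K).+1) => //; exists K; split=> //.
  have := cmp_mono (leqnSn (gn K)) (complete_cmp cK). by [].
have up l : m < l -> fam_contains F (is_complete_multipartite l).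
  move=> hl; case: hm1 => [G [FG cG]]; exists G; split=> //; exact: cmp_mono hl cG.
have le1 l : 0 < l -> ~ fam_contains F (is_complete_multipartite l) -> l <= m.
  by move=> l0 hn; rewrite leqNgt; apply/negP => /up.
exists m; split; first by split.
split.
  split=> //; split.
    move=> l hl; rewrite ltnS; apply: le1; first by case: hl.
    exact: key1 hl hK.
  case: hm => [->|[m0 hn]]; [by left | right]; exact: key2.
split=> // l l0 hl; rewrite ltnNge; apply/negP => hlm.
case: hm => [m0|[m0 hn]]; first by rewrite m0 in hlm; rewrite leqn0 in hlm; move/eqP: hlm => hlm; rewrite hlm in l0.
apply: hn; case: hl => [G [FG cG]]; exists G; split=> //; exact: cmp_mono hlm cG.
Qed.
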